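(* Consider problem (P) under Assumptions (A1)–(A3). Let $\bar{x}\in\mathbb{R}^n$ be a local minimizer for (P). Then $\bar{x}\in\mathcal{X}$ and $\bar{x}$ is critical for (P).
   Context: Problem (P): minimize $f(x)$ subject to $x\in\mathcal{X}:=\bar{\mathcal{X}}\cap\{x\in\mathbb{R}^n : x_i\in\mathbb{Z}\ \forall i\in\mathcal{I}\}$, where $\bar{\mathcal{X}}\subseteq\mathbb{R}^n$ is a closed convex polyhedral set, $\mathcal{I}\subseteq\{1,\dots,n\}$, $\mathcal{X}\neq\emptyset$, and $f:\mathbb{R}^n\to\mathbb{R}$. Partition $x=(u,z)$, where $u$ collects the components with indices not in $\mathcal{I}$ (real-valued) and $z$ those with indices in $\mathcal{I}$ (integer-valued). Standing assumptions: (A1) $f$ is continuously differentiable and $\nabla f$ is locally Lipschitz continuous; (A2) $f(u,z)=f_1(u)+\langle f_2,z\rangle$ for a smooth function $f_1$ and a fixed vector $f_2$; (A3) the set $\{z : (u,z)\in\mathcal{X}\}$ of feasible integer parts is bounded. Partial localization: $\|x\|_{PL}$ denotes a polyhedral norm (the $\ell_1$-norm $\sum_{i\notin\mathcal{I}}|x_i|$ or the $\ell_\infty$-norm $\max_{i\notin\mathcal{I}}|x_i|$) applied only to the components with indices not in $\mathcal{I}$; it is a seminorm. The closed PL-ball is $\mathbb{B}_{PL}(x,\Delta):=\{w\in\mathbb{R}^n: \|w-x\|_{PL}\le\Delta\}$. Local minimizer: $\bar x\in\mathcal{X}$ such that there is $\Delta>0$ with $f(\bar x)\le f(x)$ for all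 $x\in\mathcal{X}\cap\mathbb{B}_{PL}(\bar x,\Delta)$. Criticality measure: for $x\in\mathcal{X}$ and $\Delta\ge 0$, $\Psi(x;\Delta):=\max\{\langle\nabla f(x),x-w\rangle : w\in\mathcal{X}\cap\mathbb{B}_{PL}(x,\Delta)\}$ (so $\Psi\ge0$). A point $\bar x\in\mathcal{X}$ is $\Delta$-critical if $\Psi(\bar x;\Delta)=0$, and critical if it is $\Delta$-critical for some $\Delta>0$. *)

(* Defs.v *)
From HB Require Import structures.
From mathcomp Require Import all_boot all_order all_algebra.
From mathcomp Require Import all_classical all_reals all_analysis.
Set Implicit Arguments. Unset Strict Implicit. Unset Printing Implicit Defensive.
Import Order.TTheory GRing.Theory Num.Theory.
Import numFieldNormedType.Exports.
Local Open Scope classical_set_scope.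
Local Open Scope ring_scope.

Section MixedInteger.
Variables (R : realType) (n : nat).

Definition polyhedron (m : nat) (A : 'M[R]_(m, n)) (b : 'cV[R]_m)
  : set 'rV[R]_n := [set x | forall j, (A *m x^T) j 0 <= b j 0].

Definition feasible (I : {set 'I_n}) (m : nat) (A : 'M[R]_(m, n))
  (b : 'cV[R]_m) : set 'rV[R]_n :=
  [set x | polyhedron A b x /\ (forall i, i \in I -> x 0 i \is a Num.int)].

Definition PLnorm (linf : bool) (I : {set 'I_n}) (x : 'rV[R]_n) : R :=
  if linf then \big[Num.max/0]_(i | i \notin I) `|x 0 i|
  else \sum_(i | i \notin I) `|x 0 i|.

Definition PLball (linf : bool) (I : {set 'I_n}) (x : 'rV[R]_n) (D : R)
  : set 'rV[R]_n := [set w | PLnorm linf I (w - x) <= D].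

Definition grad (f : 'rV[R]_n -> R) (x : 'rV[R]_n) : 'rV[R]_n :=
  \row_i ('D_(delta_mx 0 i) f x).

Definition dotv (u v : 'rV[R]_n) : R := \sum_i u 0 i * v 0 i.

Definition Psi linf I m (A : 'M[R]_(m, n)) b (f : 'rV[R]_n -> R)
  (x : 'rV[R]_n) (D : R) : R :=
  sup [set dotv (grad f x) (x - w) | w in feasible I A b `&` PLball linf I x D].

Definition Delta_critical linf I m (A : 'M[R]_(m, n)) b f x D : Prop :=
  Psi linf I A b f x D = 0.

Definition critical linf I m (A : 'M[R]_(m, n)) b f x : Prop :=
  feasible I A b x /\ exists2 D : R, 0 < D & Delta_critical linf I A b f x D.

Definition local_minimizer linf I m (A : 'M[R]_(m, n)) b
  (f : 'rV[R]_n -> R) (xb : 'rV[R]_n) : Prop :=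
  feasible I A b xb /\
  exists2 D : R, 0 < D &
    forall x, feasible I A b x -> PLball linf I xb D x -> f xb <= f x.

Definition assumption_A1 (f : 'rV[R]_n -> R) : Prop :=
  (forall x, differentiable f x) /\ continuous (grad f) /\
  (forall x, exists2 r : R, 0 < r & exists L : R,
     forall y z, ball x r y -> ball x r z ->
       `|grad f y - grad f z| <= L * `|y - z|).

(* (A2): f(u,z) = f1(u) + <f2, z>, f1 smooth (C^1) and depending on u only *)
Definition assumption_A2 (I : {set 'I_n}) (f : 'rV[R]_n -> R) : Prop :=
  exists (f1 : 'rV[R]_n -> R) (f2 : 'rV[R]_n),
    (forall x y : 'rV[R]_n, (forall i, i \notin I -> x 0 i = y 0 i) -> f1 x = f1 y) /\
    (forall x, differentiable f1 x) /\ continuous (grad f1) /\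
    (forall x, f x = f1 x + \sum_(i in I) f2 0 i * x 0 i).

Definition assumption_A3 I m (A : 'M[R]_(m, n)) b : Prop :=
  exists M : R, forall x, feasible I A b x -> forall i, i \in I -> `|x 0 i| <= M.

End MixedInteger.

(* Main.v *)
Set Warnings "-notation-overridden,-ambiguous-paths,-parsing,-coercions".
Require Import Defs.
From HB Require Import structures.
From mathcomp Require Import all_boot all_order all_algebra.
From mathcomp Require Import all_classical all_reals all_analysis.
From mathcomp Require Import ring lra zify.
Import Order.TTheory GRing.Theory Num.Theory.
Import numFieldNormedType.Exports.
Local Open Scope classical_set_scope.
Local Open Scope ring_scope.

Section Helpers.
Variables (R : realType) (n : nat) (I : {set 'I_n}).
Implicit Types (f : 'rV[R]_n -> R) (x v w : 'rV[R]_n).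

Lemma D1 f x v : differentiable f x -> dotv (grad f x) v = 'd f x v.
Proof.
move=> df; rewrite {2}(row_sum_delta v) linear_sum /dotv; apply: eq_bigr => i _.
by rewrite linearZ /= mxE deriveE // mulrC.
Qed.

Lemma PL_ge0 linf v : 0 <= PLnorm linf I v.
Proof.
rewrite /PLnorm; case: linf; last by rewrite sumr_ge0.
by elim/big_ind: _ => // a b ha hb; rewrite le_max ha.
Qed.

Lemma PL_elem linf v i : i \notin I -> `|v 0 i| <= PLnorm linf I v.
Proof.
move=> iI; rewrite /PLnorm; case: linf; rewrite (bigD1 i) //=.
  by rewrite le_max lexx.
by rewrite lerDl sumr_ge0.
Qed.

Lemma PL_mono linf v w : (forall i, i \notin I -> `|v 0 i| <= `|w 0 i|) ->
  PLnorm linf I v <= PLnorm linf I w.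
Proof.
move=> H; case: linf.
  rewrite {1}/PLnorm /=; elim/big_ind: _ => [|a b ha hb|i iI].
  - exact: (PL_ge0 true w).
  - by rewrite ge_max ha hb.
  - apply: (le_trans (H i iI)); exact: (PL_elem true w _ iI).
by rewrite /PLnorm /=; apply: ler_sum.
Qed.

Lemma PL_zero linf v : (forall i, i \notin I -> v 0 i = 0) -> PLnorm linf I v = 0.
Proof.
move=> H; rewrite /PLnorm; case: linf.
  by elim/big_ind: _ => //= [a b -> ->|i iI]; rewrite ?maxxx ?H ?normr0.
by rewrite big1 // => i iI; rewrite H ?normr0.
Qed.

Lemma PL_S linf v :
  \sum_(i | i \notin I) `|v 0 i| <= n.+1%:R * PLnorm linf I v.
Proof.
case: linf; last first.
  rewrite -[X in X <= _]mul1r ler_wpM2r //; first exact: (PL_ge0 false v).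
  by rewrite ler1n.
apply: (@le_trans _ _ (\sum_(i | i \notin I) PLnorm true I v)).
  by apply: ler_sum => i iI; exact: PL_elem.
apply: (@le_trans _ _ (\sum_(i < n) PLnorm true I v)).
  rewrite [X in _ <= X](bigID (fun i => i \notin I)) /= lerDl sumr_ge0 // => *.
  exact: (PL_ge0 true v).
rewrite sumr_const card_ord -[_ *+ n]mulr_natr [X in _ <= X]mulrC ler_wpM2l ?ler_nat //; first exact: (PL_ge0 true v).
Qed.

Lemma dot_bound (a : 'I_n -> R) v : (forall i, i \in I -> v 0 i = 0) ->
  `|\sum_i a i * v 0 i| <= (\sum_i `|a i|) * \sum_(i | i \notin I) `|v 0 i|.
Proof.
move=> vI; apply: le_trans (ler_norm_sum _ _ _) _.
apply: (@le_trans _ _ (\sum_i (\sum_j `|a j|) * `|v 0 i|)).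
  apply: ler_sum => i _; rewrite normrM ler_wpM2r //.
  by rewrite (bigD1 i) //= lerDl sumr_ge0.
rewrite -mulr_sumr ler_wpM2l ?sumr_ge0 //.
rewrite (bigID (fun i => i \in I)) /= big1 ?add0r // => i iI.
by rewrite vI ?normr0.
Qed.

Lemma fin_posmin (T : finType) (g : T -> R) :
  exists2 d, 0 < d & forall k, 0 < g k -> d <= g k.
Proof.
suff: forall s : seq T, exists2 d, 0 < d & forall k, k \in s -> 0 < g k -> d <= g k.
  by move/(_ (enum T)) => [d d0 Hd]; exists d => // k; apply: Hd; rewrite mem_enum.
elim=> [|a s [d d0 Hd]]; first by exists 1.
case: (boolP (0 < g a)) => ga.
  exists (Num.min d (g a)); first by rewrite lt_min d0 ga.
  move=> k; rewrite inE => /orP [/eqP-> _ | ks gk]; first by rewrite ge_min lexx orbT.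
  by rewrite ge_min Hd.
exists d => // k; rewrite inE => /orP [/eqP-> | ks gk]; first by rewrite (negbTE ga).
exact: Hd.
Qed.

Lemma D3 f x v (c : R) : (forall h : R, f (h *: v + x) = f x + h * c) ->
  'D_v f x = c.
Proof.
move=> H; rewrite /derive; apply: cvg_lim; first exact: norm_hausdorff.
apply: (@cvg_near_cst _ _ c _ (0 : R)^' _).
near=> h; rewrite /= H addrC addKr.
have hn0 : h != 0 by near: h; exact: nbhs_dnbhs_neq.
by rewrite /GRing.scale /= mulKf.
Unshelve. all: by end_near. Qed.

Lemma D2 f x v : derivable f x v ->
  (forall t : R, 0 < t -> t <= 1 -> f x <= f (x + t *: v)) -> 0 <= 'D_v f x.
Proof.
move=> df H; rewrite /derive.
have sub : (0:R)^'+ `=>` (0:R)^'.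
  move=> P; rewrite /at_right /dnbhs /within /=; apply: filterS => y Hy yp; by apply: Hy; rewrite gt_eqF.
have cv := cvg_trans (cvg_app _ sub) df.
rewrite -(cvg_lim (@norm_hausdorff _ _) cv).
apply: limr_ge; first exact: cvgP cv.
near=> h.
have h0 : 0 < h by near: h; exact: nbhs_right_gt.
have h1 : h <= 1 by near: h; exact: nbhs_right_le.
rewrite /= -[_ *: _]/(_ * _) mulr_ge0 //; first by rewrite invr_ge0 ltW.
by rewrite subr_ge0 addrC; exact: H.
Unshelve. all: by end_near. Qed.

Lemma enc_ok (K : nat) (r : R) : r \is a Num.int -> `|r| <= K%:R ->
  ((inord `|(Num.floor r + K%:Z)%R|%N : 'I_(K.*2).+1) : nat)%:R - K%:R = r.
Proof.
move=> ri rb; have rz := floorK ri; set z := Num.floor r in rz *.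
have zb : `|z| <= K%:Z by rewrite -(ler_int R) intr_norm rz.
move: zb; rewrite ler_norml => /andP [z1 z2].
have h0 : 0 <= z + K%:Z by lia.
have hK : (`|(z + K%:Z)%R|%N < (K.*2).+1)%N by lia.
by rewrite inordK // natr_absz ger0_norm // intrD rz addrK.
Qed.

End Helpers.

Theorem mainTheorem1 (R : realType) (n : nat) (I : {set 'I_n}) (m : nat)
  (A : 'M[R]_(m, n)) (b : 'cV[R]_m) (f : 'rV[R]_n -> R) (linf : bool)
  (xb : 'rV[R]_n) :
  feasible I A b !=set0 ->
  assumption_A1 f -> assumption_A2 I f -> assumption_A3 I A b ->
  local_minimizer linf I A b f xb ->
  feasible I A b xb /\ critical linf I A b f xb.
Proof.
move=> _ [diffe _] [f1 [f2 [f1E [_ [_ fE]]]]] [M HM] [xbf [D D0 hmin]].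
split=> //; split=> //.
pose S := fun z : 'rV[R]_n => \sum_(i in I) f2 0 i * z 0 i.
have fE' : forall z, f z = f1 z + S z by [].
have SD : forall a c, S (a + c) = S a + S c.
  by move=> a c; rewrite /S -big_split; apply: eq_bigr => i _; rewrite mxE mulrDr.
have SZ : forall h a, S (h *: a) = h * S a.
  by move=> h a; rewrite /S mulr_sumr; apply: eq_bigr => i _; rewrite mxE mulrCA.
have SN : forall a, S (- a) = - S a.
  by move=> a; rewrite -scaleN1r SZ mulN1r.
pose K := Num.bound `|M|.
have HK : forall w, feasible I A b w -> forall i, i \in I -> `|w 0 i| <= K%:R.
  move=> w wf i iI; apply: le_trans (HM w wf i iI) _.
  exact: le_trans (ler_norm M) (ltW (archi_boundP (normr_ge0 M))).
pose T := {ffun 'I_n -> 'I_(K.*2).+1}.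
pose y := fun k : T => \row_i (if i \in I then ((k i : nat)%:R - K%:R : R) else xb 0 i).
have [d1 d10 Hd1] := @fin_posmin R _ (fun k : T => f (y k) - f xb).
have [d2 d20 Hd2] := @fin_posmin R _ (fun kj : T * 'I_m => (A *m (y kj.1)^T) kj.2 0 - b kj.2 0).
pose del := Num.min d1 d2.
have del0 : 0 < del by rewrite lt_min d10 d20.
have del1 : del <= d1 by rewrite ge_min lexx.
have del2 : del <= d2 by rewrite ge_min lexx orbT.
pose g := grad f xb.
pose G := \sum_i `|g 0 i|.
pose Am := \sum_j \sum_i `|A j i|.
have G0 : 0 <= G by rewrite sumr_ge0.
have Am0 : 0 <= Am by rewrite !sumr_ge0 // => j _; rewrite sumr_ge0.
pose C := (G + Am + 1) * n.+1%:R.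
have C0 : 0 < C by rewrite mulr_gt0 // ltr_pwDr // addr_ge0.
pose D' := Num.min D (del / (2 * C)).
have D'0 : 0 < D' by rewrite lt_min D0 divr_gt0 // mulr_gt0.
have D'D : D' <= D by rewrite ge_min lexx.
have CD : C * D' <= del / 2.
  apply: (@le_trans _ _ (C * (del / (2 * C)))).
    by apply: ler_wpM2l; [exact: ltW | rewrite /D' ge_min lexx orbT].
  by rewrite le_eqVlt; apply/orP; left; apply/eqP; field; rewrite gt_eqF.
have Ae : forall (j : 'I_m) (z : 'rV[R]_n), (A *m z^T) j 0 = \sum_i A j i * z 0 i.
  by move=> j z; rewrite !mxE; apply: eq_bigr => i _; rewrite !mxE.
exists D' => //.
rewrite /Delta_critical /Psi.
set E := [set _ | _ in _].
have E0 : E 0.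
  rewrite /E /=; exists xb; last by rewrite /dotv big1 // => i _; rewrite !mxE subrr mulr0.
  split => //; rewrite /PLball /= PL_zero ?ltW // => i _; by rewrite !mxE subrr.
have Eub : ubound E 0.
  move=> r [w [wf wb] <-].
  rewrite /PLball /= in wb.
  have [wfp wint] := wf.
  rewrite D1 ?diffe // -opprB raddfN oppr_le0.
  have [x0 x0def] : exists x0 : 'rV[R]_n, x0 = \row_i (if i \in I then w 0 i else xb 0 i) by eexists.
  pose k : T := [ffun i => inord `|(Num.floor (w 0 i) + K%:Z)%R|%N].
  have x0y : x0 = y k.
    apply/matrixP => i j; rewrite x0def (ord1 i) !mxE ffunE; case: ifP => // iI.
    by rewrite enc_ok //; [exact: wint | exact: HK].
  have x0xb : forall i, i \notin I -> x0 0 i = xb 0 i.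
    by move=> i iI; rewrite x0def mxE (negbTE iI).
  have x0w : forall i, i \in I -> x0 0 i = w 0 i by move=> i iI; rewrite x0def mxE iI.
  have f1x0 : f1 x0 = f1 xb by apply: f1E.
  have -> : w - xb = (w - x0) + (x0 - xb) by rewrite addrA subrK.
  rewrite raddfD /=.
  have hc : 'd f xb (x0 - xb) = f x0 - f xb.
    rewrite -deriveE //; apply: D3 => h.
    rewrite !fE' (f1E (h *: (x0 - xb) + xb) xb); last first.
      by move=> i iI; rewrite !mxE x0xb // subrr mulr0 add0r.
    rewrite SD SZ SD SN f1x0; ring.
  rewrite hc.
  set c := f x0 - f xb.
  set p := 'd f xb (w - x0).
  have vI : forall i, i \in I -> (w - x0) 0 i = 0 by move=> i iI; rewrite !mxE x0w // subrr.
  have Sb : \sum_(i | i \notin I) `|(w - x0) 0 i| <= n.+1%:R * D'.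
    apply: le_trans (@PL_S R n I linf _) _; rewrite ler_wpM2l //.
    apply: le_trans wb; apply: PL_mono => i iI; by rewrite !mxE x0xb.
  have hp : `|p| <= del / 2.
    rewrite /p -D1 // /dotv; apply: le_trans (@dot_bound R n I _ _ vI) _.
    apply: le_trans CD.
    apply: (@le_trans _ _ (G * (n.+1%:R * D'))); first by rewrite ler_wpM2l.
    rewrite /C -mulrA ler_wpM2r ?mulr_ge0 ?ltW //.
    lra.
  have hp' : - (del / 2) <= p.
    by rewrite lerNl; apply: le_trans hp; rewrite -normrN ler_norm.
  have [px0|npx0] := pselect (polyhedron A b x0).
  - have fx0 : feasible I A b x0.
      by split => // i iI; rewrite x0w //; exact: wint.
    have bx0 : PLball linf I xb D x0.
      by rewrite /PLball /= PL_zero ?ltW // => i iI; rewrite !mxE x0xb // subrr.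
    have c0 : 0 <= c by rewrite subr_ge0; exact: hmin.
    move: c0; rewrite le_eqVlt => /orP [/eqP c0 | cpos].
    + rewrite -c0 addr0 /p -deriveE //; apply: D2; first exact: diff_derivable.
      move=> t t0 t1.
      pose pt := x0 + t *: (w - x0).
      have ptf : feasible I A b pt.
        split; last by move=> i iI; rewrite !mxE x0w // subrr mulr0 addr0; exact: wint.
        move=> j; have := px0 j; have := wfp j; rewrite !Ae => hw hx.
        rewrite (eq_bigr (fun i => A j i * x0 0 i + t * (A j i * w 0 i) - t * (A j i * x0 0 i))); last first.
          by move=> i _; rewrite !mxE; ring.
        rewrite sumrB big_split /= -!mulr_sumr.
        have h1 : 0 <= (1 - t) * (b j 0 - \sum_i A j i * x0 0 i).
          by apply: mulr_ge0; rewrite subr_ge0.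
        have h2 : 0 <= t * (b j 0 - \sum_i A j i * w 0 i).
          by apply: mulr_ge0; [exact: ltW | rewrite subr_ge0].
        move: h1 h2; set X := \sum_i A j i * x0 0 i; set W := \sum_i A j i * w 0 i.
        move=> h1 h2; nra.
      have ptb : PLball linf I xb D pt.
        rewrite /PLball /=; apply: le_trans D'D; apply: le_trans wb.
        apply: PL_mono => i iI; rewrite !mxE x0xb //.
        have -> : xb 0 i + t * (w 0 i - xb 0 i) - xb 0 i = t * (w 0 i - xb 0 i) by ring.
        by rewrite normrM (ger0_norm (ltW t0)) ler_piMl.
      have Sv : S (w - x0) = 0 by rewrite /S big1 // => i iI; rewrite vI // mulr0.
      have Sx : S x0 = S xb.
        move: c0; rewrite /c !fE' f1x0 => c0'; lra.
      have := hmin pt ptf ptb; rewrite !fE' /pt !SD !SZ Sv mulr0 !addr0 Sx.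
      by rewrite (f1E (xb + t *: (w - x0)) (x0 + t *: (w - x0))) // => i iI; rewrite !mxE x0xb.
    + have : del <= c.
        apply: le_trans del1 _; have := Hd1 k; rewrite /= -x0y; apply; exact: cpos.
      move=> hdc; lra.
  - exfalso.
    have [j hj] : exists j, ~ ((A *m x0^T) j 0 <= b j 0) by apply/existsNP.
    have hpos : 0 < (A *m (y k)^T) j 0 - b j 0.
      by rewrite -x0y subr_gt0 ltNge; apply/negP.
    have hd2 := Hd2 (k, j) hpos; rewrite /= -x0y in hd2.
    have hwj := wfp j.
    have vI' : forall i, i \in I -> (x0 - w) 0 i = 0 by move=> i iI; rewrite !mxE x0w // subrr.
    have bnd : `|(A *m x0^T) j 0 - (A *m w^T) j 0| <= del / 2.
      rewrite !Ae -sumrB.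
      rewrite (eq_bigr (fun i => A j i * (x0 - w) 0 i)); last first.
        by move=> i _; rewrite !mxE mulrBr.
      apply: le_trans (@dot_bound R n I _ _ vI') _.
      apply: le_trans CD.
      apply: (@le_trans _ _ (Am * (n.+1%:R * D'))).
        apply: ler_pM; rewrite ?sumr_ge0 //.
          by rewrite /Am (bigD1 j) //= lerDl sumr_ge0 // => *; rewrite sumr_ge0.
        apply: le_trans (@PL_S R n I linf _) _; rewrite ler_wpM2l //.
        apply: le_trans wb; apply: PL_mono => i iI; by rewrite !mxE x0xb // distrC.
      rewrite /C -mulrA ler_wpM2r ?mulr_ge0 ?ltW //.
      lra.
    have := ler_norm ((A *m x0^T) j 0 - (A *m w^T) j 0).
    move: bnd hd2 hwj del2 del0; set X := (A *m x0^T) j 0; set W := (A *m w^T) j 0.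
    move=> *; lra.
apply/eqP; rewrite eq_le; apply/andP; split.
  by apply: ge_sup => //; exists 0.
by apply: (ub_le_sup _ E0); exists 0.
Qed.
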